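(* Let $v\in\mathcal{H}$ and let $x$ be the component of $Lv$ in $\mathcal{R}$ (with respect to $\mathcal{H}=\mathcal{R}\oplus\mathcal{N}$). Then $x\in\mathcal{H}^1=\mathcal{R}\cap H^1([0,\pi]\times\mathbb{T})$.
   Context: $\mathbb{T}=\mathbb{R}/(2\pi\mathbb{Z})$, $\mathcal{H}=L^2([0,\pi]\times\mathbb{T})$. For $m\in\mathbb{N}$, $n\in\mathbb{N}_0$, $\phi_{(m,n)}=\frac{\sqrt2}{\pi}\sin(ms)\cos(nt)$, $\psi_{(m,n)}=\frac{\sqrt2}{\pi}\sin(ms)\sin(nt)$; every $v\in\mathcal{H}$ is written $v=\sum[\alpha_{(m,n)}\phi_{(m,n)}+\beta_{(m,n)}\psi_{(m,n)}]$ with $\sum(\alpha_{(m,n)}^2+\beta_{(m,n)}^2)<\infty$. $\mathcal{R}$ (resp. $\mathcal{N}$) is the closed span of the $\phi_{(m,n)},\psi_{(m,n)}$ with $m\neq n$ (resp. $m=n$). The distinct values $m^2-n^2$ are ordered $\dots<\lambda_{-1}<\lambda_0=0<\lambda_1<\dots$. Fix a nonzero integer $k$ and $\varepsilon_1$ with $0<\varepsilon_1<\lambda_k-\lambda_{k-1}$. $L:\mathcal{H}\to\mathcal{H}$ is $Lv=\sum\left[\frac{\alpha_{(m,n)}}{m^2-n^2-\lambda_{k-1}-\varepsilon_1}\phi_{(m,n)}+\frac{\beta_{(m,n)}}{m^2-n^2-\lambda_{k-1}-\varepsilon_1}\psi_{(m,n)}\right]$. *)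

(* Defs.v *)
From Stdlib Require Import Reals ZArith Lia Lra.
Open Scope R_scope.

(* An element v of H = L^2([0,pi] x T) is identified with its coefficient
   families (alpha_(m,n), beta_(m,n)) w.r.t. the orthonormal basis
   phi_(m,n) = sqrt2/pi sin(ms)cos(nt), psi_(m,n) = sqrt2/pi sin(ms)sin(nt),
   m >= 1, n >= 0.  Values at m = 0 are irrelevant and never used. *)
Definition coef := nat -> nat -> R.

Definition dsum (f : nat -> nat -> R) (N : nat) : R :=
  sum_f 1 N (fun m => sum_f_R0 (fun n => f m n) N).

(* v in H : sum (alpha^2 + beta^2) < oo  (nonnegative terms: bounded partial sums). *)
Definition in_H (a b : coef) : Prop :=
  exists B : R, forall N : nat, dsum (fun m n => a m n ^ 2 + b m n ^ 2) N <= B.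

Definition in_Rsp (a b : coef) : Prop :=
  in_H a b /\ forall m : nat, (1 <= m)%nat -> a m m = 0 /\ b m m = 0.

(* H^1 membership, expressed through Fourier coefficients:
   sum (m^2 + n^2)(alpha^2 + beta^2) < oo. *)
Definition in_H1coef (a b : coef) : Prop :=
  exists B : R, forall N : nat,
    dsum (fun m n => (INR m ^ 2 + INR n ^ 2) * (a m n ^ 2 + b m n ^ 2)) N <= B.

Definition in_H1sp (a b : coef) : Prop := in_Rsp a b /\ in_H1coef a b.

(* The operator L with shift c = lambda_{k-1} + eps1, acting on one coefficient family. *)
Definition Lcoef (c : R) (a : coef) : coef :=
  fun m n => a m n / (INR m ^ 2 - INR n ^ 2 - c).

Definition projR (a : coef) : coef :=
  fun m n => if Nat.eqb m n then 0 else a m n.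

Definition is_spec (z : Z) : Prop :=
  exists m n : nat, (1 <= m)%nat /\ z = (Z.of_nat m ^ 2 - Z.of_nat n ^ 2)%Z.

Definition spec_enum (lam : Z -> Z) : Prop :=
  (forall i j : Z, (i < j)%Z -> (lam i < lam j)%Z) /\
  (forall i : Z, is_spec (lam i)) /\
  (forall z : Z, is_spec z -> exists i : Z, lam i = z) /\
  lam 0%Z = 0%Z.

(* Main.v *)
Require Import Defs.
From Stdlib Require Import Reals ZArith Lia Lra Psatz.
Open Scope R_scope.

Lemma dsum_le (f g : nat -> nat -> R) (K : R) (N : nat) :
  (forall m n, (1 <= m)%nat -> f m n <= K * g m n) ->
  dsum f N <= K * dsum g N.
Proof.
  intros H. unfold dsum, sum_f.
  rewrite scal_sum. apply sum_Rle. intros x _.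
  rewrite Rmult_comm, scal_sum. apply sum_Rle. intros y _. rewrite Rmult_comm.
  apply H. lia.
Qed.

Lemma gap (lam : Z -> Z) (Hlam : spec_enum lam) (k : Z) (m n : nat) :
  (1 <= m)%nat ->
  INR m ^ 2 - INR n ^ 2 <= IZR (lam (k-1)%Z) \/ IZR (lam k) <= INR m ^ 2 - INR n ^ 2.
Proof.
  intros Hm. destruct Hlam as [Hmono [_ [Hsur _]]].
  destruct (Hsur (Z.of_nat m ^ 2 - Z.of_nat n ^ 2)%Z) as [i Hi].
  { exists m, n; split; auto. }
  assert (E : INR m ^ 2 - INR n ^ 2 = IZR (lam i)).
  { rewrite Hi, minus_IZR, !INR_IZR_INZ. rewrite !pow_IZR. reflexivity. }
  rewrite E.
  destruct (Z_lt_le_dec i k).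
  - left. apply IZR_le. destruct (Z.eq_dec i (k-1)).
    + subst; lia.
    + assert (i < k-1)%Z by lia. specialize (Hmono _ _ H). lia.
  - right. apply IZR_le. destruct (Z.eq_dec i k).
    + subst; lia.
    + assert (k < i)%Z by lia. specialize (Hmono _ _ H). lia.
Qed.

Lemma sq_bound (m n : nat) : m <> n ->
  INR m ^ 2 + INR n ^ 2 <= (INR m ^ 2 - INR n ^ 2) ^ 2.
Proof.
  intros H. assert (Hx := pos_INR m). assert (Hy := pos_INR n).
  assert (G : 1 <= (INR m - INR n) ^ 2).
  { destruct (Nat.lt_gt_cases m n) as [[h|h] _]; auto.
    - apply le_INR in h. rewrite S_INR in h. nra.
    - apply le_INR in h. rewrite S_INR in h. nra. }
  assert (E : (INR m ^ 2 - INR n ^ 2) ^ 2 = (INR m - INR n)^2 * (INR m + INR n)^2) by ring.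
  rewrite E. assert (0 <= (INR m + INR n)^2) by nra. assert ((INR m + INR n)^2 <= (INR m - INR n)^2 * (INR m + INR n)^2) by nra. nra.
Qed.

Theorem lemma1 (lam : Z -> Z) (Hlam : spec_enum lam)
  (k : Z) (hk : k <> 0%Z)
  (eps1 : R) (he0 : 0 < eps1) (he1 : eps1 < IZR (lam k) - IZR (lam (k - 1)%Z))
  (alpha beta : coef) (hv : in_H alpha beta) :
  in_H1sp (projR (Lcoef (IZR (lam (k - 1)%Z) + eps1) alpha))
          (projR (Lcoef (IZR (lam (k - 1)%Z) + eps1) beta)).
Proof.
  set (c := IZR (lam (k - 1)%Z) + eps1).
  set (g := IZR (lam k) - IZR (lam (k - 1)%Z) - eps1).
  set (d2 := Rmin (eps1^2) (g^2)).
  assert (Hg : 0 < g) by (unfold g; lra).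
  assert (Hd2 : 0 < d2).
  { unfold d2. apply Rmin_glb_lt; nra. }
  assert (HD : forall m n, (1 <= m)%nat -> d2 <= (INR m ^ 2 - INR n ^ 2 - c) ^ 2).
  { intros m n Hm. destruct (gap lam Hlam k m n Hm) as [h|h]; unfold d2, c.
    - eapply Rle_trans. apply Rmin_l. unfold c in *. nra.
    - eapply Rle_trans. apply Rmin_r. unfold g in *. nra. }
  set (C := 2 + 2 * c^2 / d2).
  assert (HC : forall m n, (1 <= m)%nat -> m <> n ->
     INR m ^ 2 + INR n ^ 2 <= C * (INR m ^ 2 - INR n ^ 2 - c) ^ 2).
  { intros m n Hm Hmn. pose proof (sq_bound m n Hmn). pose proof (HD m n Hm).
    set (D := INR m ^ 2 - INR n ^ 2 - c) in *.
    assert (c^2 <= c^2 / d2 * D^2).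
    { unfold Rdiv. rewrite Rmult_assoc. rewrite <- (Rmult_1_r (c^2)) at 1.
      apply Rmult_le_compat_l. nra.
      apply (Rmult_le_reg_l d2); auto. rewrite <- Rmult_assoc, Rinv_r; lra. }
    assert (E : INR m ^ 2 - INR n ^ 2 = D + c) by (unfold D; ring).
    rewrite E in H. assert (EC : C * D^2 = 2*D^2 + 2*(c^2/d2*D^2)) by (unfold C; field; lra). rewrite EC. assert ((D+c)^2 <= 2*D^2 + 2*c^2) by (pose proof (pow2_ge_0 (D-c)); nra). lra. }
  assert (Hpt : forall (a : coef) m n, (1 <= m)%nat ->
     (projR (Lcoef c a) m n)^2 <= (/d2) * (a m n ^2) /\
     (INR m ^ 2 + INR n ^ 2) * (projR (Lcoef c a) m n)^2 <= C * (a m n ^2)).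
  { intros a m n Hm. unfold projR, Lcoef.
    destruct (Nat.eqb_spec m n) as [e|e].
    - assert (0 <= /d2) by (apply Rlt_le, Rinv_0_lt_compat; auto).
      assert (0 <= C).
      { unfold C. assert (0 <= c^2/d2) by (unfold Rdiv; apply Rmult_le_pos; [nra | apply Rlt_le, Rinv_0_lt_compat; auto]). lra. }
      split; nra.
    - pose proof (HD m n Hm). pose proof (HC m n Hm e).
      set (D := INR m ^ 2 - INR n ^ 2 - c) in *.
      assert (DP : 0 < D^2) by lra.
      assert (Dnz : D <> 0) by (intro z; rewrite z in DP; lra).
      assert (Q : (a m n / D) ^ 2 = a m n ^ 2 / D^2) by (field; auto).
      rewrite Q. split.
      + unfold Rdiv. rewrite (Rmult_comm (/ d2)). apply Rmult_le_compat_l. nra.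
        apply Rinv_le_contravar; auto.
      + assert (T : (INR m ^ 2 + INR n ^ 2) * (a m n ^ 2 / D ^ 2)
                  = ((INR m ^ 2 + INR n ^ 2) / D^2) * a m n ^ 2) by (field; auto).
        rewrite T. apply Rmult_le_compat_r. nra.
        apply (Rmult_le_reg_r (D^2)); auto. unfold Rdiv.
        rewrite Rmult_assoc, Rinv_l by lra. lra. }
  destruct hv as [B HB].
  assert (HB0 : 0 <= B).
  { specialize (HB 0%nat). eapply Rle_trans; [|exact HB].
    unfold dsum, sum_f. simpl. nra. }
  assert (C0 : 0 <= C).
  { unfold C. assert (0 <= c^2/d2) by (unfold Rdiv; apply Rmult_le_pos; [nra | apply Rlt_le, Rinv_0_lt_compat; auto]). lra. }
  split; [split|].
  - exists (/d2 * B). intros N.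
    eapply Rle_trans; [apply (dsum_le _ (fun m n => alpha m n ^ 2 + beta m n ^ 2) (/d2))|].
    + intros m n Hm. destruct (Hpt alpha m n Hm), (Hpt beta m n Hm). rewrite Rmult_plus_distr_l; lra.
    + apply Rmult_le_compat_l; auto. apply Rlt_le, Rinv_0_lt_compat; auto.
  - intros m Hm. unfold projR. rewrite Nat.eqb_refl. auto.
  - exists (C * B). intros N.
    eapply Rle_trans; [apply (dsum_le _ (fun m n => alpha m n ^ 2 + beta m n ^ 2) C)|].
    + intros m n Hm. destruct (Hpt alpha m n Hm), (Hpt beta m n Hm). rewrite Rmult_plus_distr_l; lra.
    + apply Rmult_le_compat_l; auto.
Qed.
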